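(* Assume (A1)–(A3) and $\alpha>1$, let $\mu>0$ and $LR_{target}>0$. Consider the problem of choosing parameters $\bar c\ge zMIC$ and $T_{bc}\ge0$ such that the profile $C_{bc}$ (equal to $\bar c$ on $[0,T_{bc}]$ and to $\bar c e^{-\mu(t-T_{bc})}$ for $t>T_{bc}$) satisfies $LR_{max}[C_{bc}]=LR_{target}$, with $AUC[C_{bc}]$ minimal. Let $c_{opt}$ be the unique solution in $(0,\infty)$ of $k'(c)=\frac{k(c)-r}{c}$ and $$\rho=\int_{zMIC}^{c_{opt}}\frac{k(u)-r}{u}\,du.$$ (i) If $\rho<\ln(10)\,LR_{target}\,\mu$, the solution is $\bar c=c_{opt}$ and $$T_{bc}=T_{bc,opt}=\frac{\ln(10)\,LR_{target}-\mu^{-1}\rho}{k(c_{opt})-r};$$ the maximal log-reduction $LR_{target}$ is reached at time $T^*=T_{bc,opt}+\frac1\mu\ln\left(\frac{c_{opt}}{zMIC}\right)$, and $$AUC_{bc,opt}=\left[\mu^{-1}+\frac{\ln(10)\,LR_{target}-\mu^{-1}\rho}{k(c_{opt})-r}\right]c_{opt}.$$ (ii) If $\rho\ge\ln(10)\,LR_{target}\,\mu$, the solution is $T_{bc}=0$ and $\bar c=c^*$, where $c^*$ is the solution of $\int_{zMIC}^{c^*}\frac{k(u)-r}{u}du=\ln(10)\,LR_{target}\,\mu$; so $C_{bc}(t)=c^*e^{-\mu t}$, the target is reached at $T^*=\frac1\mu\ln\left(\frac{c^*}{zMIC}\right)$, and $AUC_{bc,opt}=\mu^{-1}c^*$.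
   Context: Let $r>0$ and let $k:[0,\infty)\to[0,\infty)$ satisfy: (A1) $k(0)=0$, $k$ is continuous and strictly increasing on $[0,\infty)$, and twice differentiable on $(0,\infty)$; (A2) $\lim_{c\to\infty}k(c)=k_{max}<\infty$; (A3) either (i) (concave case) $k''(c)<0$ for all $c>0$, or (ii) (sigmoidal case) there is $c_{infl}>0$ with $k''(c)>0$ for $0<c<c_{infl}$ and $k''(c)<0$ for $c>c_{infl}$. Set $\alpha=k_{max}/r$, and let $zMIC$ be the unique $c>0$ with $k(c)=r$. For a non-negative $C\in L^1[0,\infty)$: $AUC[C]=\int_0^\infty C(t)dt$, $LR(T)=\frac{1}{\ln 10}\int_0^T[k(C(t))-r]dt$, $LR_{max}[C]=\max_{T\ge0}LR(T)$. The profile $C_{bc}$ is the one induced, under one-compartment pharmacokinetics $C'=V^{-1}d(t)-\mu C$, $C(0)=0$, by the bolus+continuous dosing schedule $d(t)=V\bar c[\delta(t)+\mu H(T_{bc}-t)]$ ($H$ the Heaviside function, $\mu>0$ the drug decay rate). *)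

(* Defs.v *)
From Stdlib Require Import Reals.
From Coquelicot Require Import Coquelicot.
Open Scope R_scope.

Definition Cbc (cbar mu Tbc : R) (t : R) : R :=
  if Rle_dec t Tbc then cbar else cbar * exp (- mu * (t - Tbc)).

Definition AUC (C : R -> R) : R :=
  RInt_gen C (at_point 0) (Rbar_locally p_infty).

Definition LR (k : R -> R) (r : R) (C : R -> R) (T : R) : R :=
  / ln 10 * RInt (fun t => k (C t) - r) 0 T.

Definition is_LRmax (k : R -> R) (r : R) (C : R -> R) (L : R) : Prop :=
  (exists T, 0 <= T /\ LR k r C T = L) /\ (forall T, 0 <= T -> LR k r C T <= L).

Definition feasible (k : R -> R) (r zMIC mu LRt cbar Tbc : R) : Prop :=
  zMIC <= cbar /\ 0 <= Tbc /\ is_LRmax k r (Cbc cbar mu Tbc) LRt.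

Definition is_solution (k : R -> R) (r zMIC mu LRt cbar Tbc : R) : Prop :=
  feasible k r zMIC mu LRt cbar Tbc /\
  forall c T, feasible k r zMIC mu LRt c T ->
    AUC (Cbc cbar mu Tbc) <= AUC (Cbc c mu T) /\
    (AUC (Cbc c mu T) = AUC (Cbc cbar mu Tbc) -> c = cbar /\ T = Tbc).

(* Main.v *)
Require Import Defs.
From Stdlib Require Import Reals Lra.
From Coquelicot Require Import Coquelicot.
Open Scope R_scope.

Lemma Cbc_eq c mu T t : Cbc c mu T t = c * exp (- mu * Rmax 0 (t - T)).
Proof.
  unfold Cbc. destruct (Rle_dec t T).
  - rewrite Rmax_left by lra. rewrite Rmult_0_r, exp_0. ring.
  - rewrite Rmax_right by lra. reflexivity.
Qed.

Lemma cont_Rmax0 T x : continuous (fun t => Rmax 0 (t - T)) x.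
Proof.
  apply continuous_ext with (f := fun t => plus (scal (/2) (t - T)) (scal (/2) (Rabs (t - T)))).
  { intros t. unfold plus, scal; simpl. unfold mult; simpl.
    unfold Rmax. destruct (Rle_dec 0 (t - T)).
    - rewrite Rabs_right by lra. field.
    - rewrite Rabs_left by lra. field. }
  apply (@continuous_plus R_UniformSpace R_AbsRing R_NormedModule (fun t => scal (/2) (t - T)) (fun t => scal (/2) (Rabs (t - T)))).
  - apply (@continuous_scal_r R_UniformSpace R_AbsRing R_NormedModule (/2) (fun t => t - T)).
    apply (continuous_minus (fun t => t) (fun _ => T)); [apply continuous_id | apply continuous_const].
  - apply (@continuous_scal_r R_UniformSpace R_AbsRing R_NormedModule (/2) (fun t => Rabs (t - T))). apply continuous_Rabs_comp.
    apply (continuous_minus (fun t => t) (fun _ => T)); [apply continuous_id | apply continuous_const].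
Qed.

Lemma cont_Cbc c mu T x : continuous (Cbc c mu T) x.
Proof.
  apply continuous_ext with (f := fun t => c * exp (- mu * Rmax 0 (t - T))).
  { intros; rewrite Cbc_eq; reflexivity. }
  apply (continuous_mult (fun _ => c) (fun t => exp (- mu * Rmax 0 (t - T)))).
  apply continuous_const.
  apply continuous_exp_comp.
  apply (continuous_mult (fun _ => - mu) (fun t => Rmax 0 (t - T))).
  apply continuous_const. apply cont_Rmax0.
Qed.

Lemma Cbc_pos c mu T t : 0 < c -> 0 < Cbc c mu T t.
Proof. intros; rewrite Cbc_eq; apply Rmult_lt_0_compat; [lra| apply exp_pos]. Qed.

Lemma lim_E c mu T : 0 < mu ->
  filterlim (fun x => - (c / mu) * exp (- mu * (x - T))) (Rbar_locally p_infty) (locally 0).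
Proof.
  intros Hmu.
  assert (H : is_lim (fun y => exp ((- mu) * y + mu * T)) p_infty 0).
  { apply (is_lim_comp_lin (fun z => exp z) (-mu) (mu*T) p_infty 0).
    2: lra.
    replace (Rbar_plus (Rbar_mult (- mu) p_infty) (mu * T)) with m_infty.
    apply is_lim_exp_m.
    simpl. destruct (Rle_dec 0 (-mu)) as [h|h]; [exfalso; lra|reflexivity]. }
  apply (is_lim_scal_l _ (- (c/mu))) in H.
  replace (Rbar_mult (- (c / mu)) 0) with (Finite 0) in H by (simpl; f_equal; ring).
  eapply is_lim_ext in H.
  2:{ intros y. replace (- mu * y + mu * T) with (- mu * (y - T)) by ring. reflexivity. }
  exact H.
Qed.

Lemma AUC_Cbc c mu T : 0 <= T -> 0 < mu -> AUC (Cbc c mu T) = c * T + c / mu.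
Proof.
  intros HT Hmu. unfold AUC.
  apply is_RInt_gen_unique.
  replace (c * T + c / mu) with (plus (c * T) (c / mu)) by reflexivity.
  apply (@is_RInt_gen_Chasles R_NormedModule (at_point 0) (Rbar_locally p_infty) _ _ (Cbc c mu T) T (c * T) (c / mu)).
  - apply is_RInt_gen_at_point.
    apply is_RInt_ext with (f := fun _ => c).
    { intros x Hx. rewrite Rmin_left in Hx by lra. rewrite Rmax_right in Hx by lra.
      unfold Cbc. destruct (Rle_dec x T); [reflexivity| lra]. }
    replace (c * T) with (scal (T - 0) c) by (unfold scal; simpl; unfold mult; simpl; ring).
    exact (@is_RInt_const R_NormedModule 0 T c).
  - set (E := fun x => - (c / mu) * exp (- mu * (x - T))).
    assert (HdE : forall x, is_derive E x (c * exp (- mu * (x - T)))).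
    { intros x. unfold E. auto_derive; auto. unfold Rminus. field. lra. }
    apply is_RInt_gen_ext with (f := Derive E).
    { apply Filter_prod with (Q := fun x => x = T) (R := fun y => T < y).
      - reflexivity.
      - exists T. auto.
      - intros a b Ha Hb x Hx. simpl in Hx. subst a.
        rewrite Rmin_left in Hx by lra. rewrite Rmax_right in Hx by lra.
        rewrite (is_derive_unique _ _ _ (HdE x)).
        unfold Cbc. destruct (Rle_dec x T); [lra|reflexivity]. }
    replace (c / mu) with (0 - E T) by (unfold E; rewrite Rminus_diag, Rmult_0_r, exp_0; field; lra).
    apply is_RInt_gen_Derive.
    + apply filter_forall. intros [a b] x _. eexists; apply HdE.
    + apply filter_forall. intros [a b] x _.
      apply continuous_ext with (f := fun x => c * exp (- mu * (x - T))).
      { intros y. symmetry; apply is_derive_unique, HdE. }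
      apply (@ex_derive_continuous R_AbsRing R_NormedModule). auto_derive; auto.
    + intros P HP. unfold filtermap, at_point. apply locally_singleton. exact HP.
    + apply lim_E; exact Hmu.
Qed.

Lemma exp_le' x y : x <= y -> exp x <= exp y.
Proof. intros [H|H]; [left; apply exp_increasing; auto| subst; lra]. Qed.

Lemma h_cont (k : R -> R) r u : continuous k u -> 0 < u -> continuous (fun u => (k u - r) / u) u.
Proof.
  intros Hk Hu.
  apply (@continuous_mult R_UniformSpace R_AbsRing (fun u => k u - r) (fun u => / u)).
  - apply (@continuous_minus R_UniformSpace R_AbsRing R_NormedModule k (fun _ => r)); auto.
    apply continuous_const.
  - apply (continuous_Rinv_comp (fun u => u)). apply continuous_id. lra.
Qed.

Lemma phi_cont (k : R -> R) r c mu T t : (forall x, 0 < x -> continuous k x) -> 0 < c ->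
  continuous (fun t => k (Cbc c mu T t) - r) t.
Proof.
  intros Hk Hc.
  apply (@continuous_minus R_UniformSpace R_AbsRing R_NormedModule (fun t => k (Cbc c mu T t)) (fun _ => r)).
  - apply (@continuous_comp R_UniformSpace R_UniformSpace R_UniformSpace (Cbc c mu T) k).
    apply cont_Cbc. apply Hk. apply Cbc_pos; auto.
  - apply continuous_const.
Qed.

Lemma RInt_scal_R (f : R -> R) a b l : ex_RInt f a b -> RInt (fun x => l * f x) a b = l * RInt f a b.
Proof. intros H. exact (@RInt_scal R_CompleteNormedModule f a b l H). Qed.

Lemma RInt_comp_R (f g dg : R -> R) a b :
  (forall x, Rmin a b <= x <= Rmax a b -> continuous f (g x)) ->
  (forall x, Rmin a b <= x <= Rmax a b -> is_derive g x (dg x) /\ continuous dg x) ->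
  RInt (fun y => dg y * f (g y)) a b = RInt f (g a) (g b).
Proof. intros H1 H2. exact (@RInt_comp R_CompleteNormedModule f g dg a b H1 H2). Qed.

Lemma RInt_swap_R (f : R -> R) a b : ex_RInt f a b -> RInt f b a = - RInt f a b.
Proof. intros H. rewrite <- (@opp_RInt_swap R_CompleteNormedModule f a b H). reflexivity. Qed.

Lemma LR_calc (k : R -> R) r c mu T zMIC :
  (forall x, 0 < x -> continuous k x) ->
  (forall x y, 0 <= x -> x <= y -> k x <= k y) ->
  0 < zMIC -> k zMIC = r -> zMIC <= c -> 0 <= T -> 0 < mu ->
  RInt (fun t => k (Cbc c mu T t) - r) 0 (T + / mu * ln (c / zMIC))
    = (k c - r) * T + / mu * RInt (fun u => (k u - r) / u) zMIC c /\
  (forall t, 0 <= t -> RInt (fun t => k (Cbc c mu T t) - r) 0 t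
                      <= RInt (fun t => k (Cbc c mu T t) - r) 0 (T + / mu * ln (c / zMIC))).
Proof.
  intros Hk Hkm Hz Hkz Hc HT Hmu.
  set (phi := fun t => k (Cbc c mu T t) - r).
  set (Ts := T + / mu * ln (c / zMIC)).
  assert (Hc0 : 0 < c) by lra.
  assert (Hln : 0 <= ln (c / zMIC)).
  { rewrite <- ln_1. destruct (Req_dec c zMIC) as [e|n].
    - subst. rewrite Rdiv_diag by lra. lra.
    - left. apply ln_increasing; [lra|]. apply (Rmult_lt_reg_r zMIC); auto.
      field_simplify; lra. }
  assert (HTs : T <= Ts).
  { unfold Ts. assert (0 <= / mu * ln (c / zMIC)).
    { apply Rmult_le_pos; auto. left; apply Rinv_0_lt_compat; auto. } lra. }
  assert (HgTs : c * exp (- mu * (Ts - T)) = zMIC).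
  { unfold Ts. replace (- mu * (T + / mu * ln (c / zMIC) - T)) with (- ln (c / zMIC)) by (field; lra).
    rewrite exp_Ropp, exp_ln. field; lra. apply Rdiv_lt_0_compat; lra. }
  assert (Hphic : forall t, continuous phi t) by (intros; apply phi_cont; auto).
  assert (Hex : forall a b, ex_RInt phi a b) by (intros; apply (@ex_RInt_continuous R_CompleteNormedModule); auto).
  assert (Hge : forall s, s <= Ts -> zMIC <= Cbc c mu T s).
  { intros s Hs. rewrite Cbc_eq, <- HgTs. apply Rmult_le_compat_l; [lra|].
    apply exp_le'. apply Rmult_le_compat_neg_l; [lra|]. apply Rmax_lub; lra. }
  assert (Hle : forall s, Ts <= s -> Cbc c mu T s <= zMIC).
  { intros s Hs. rewrite Cbc_eq, <- HgTs. apply Rmult_le_compat_l; [lra|].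
    apply exp_le'. apply Rmult_le_compat_neg_l; [lra|].
    rewrite Rmax_right; lra. }
  split.
  - rewrite <- (RInt_Chasles phi 0 T Ts) by auto.
    rewrite (RInt_ext phi (fun _ => k c - r) 0 T).
    2:{ intros x Hx. rewrite Rmin_left in Hx by lra. rewrite Rmax_right in Hx by lra.
        unfold phi, Cbc. destruct (Rle_dec x T); [reflexivity| lra]. }
    rewrite RInt_const.
    set (g := fun s => c * exp (- mu * (s - T))).
    set (h := fun u => (k u - r) / u).
    assert (Hgpos : forall s, 0 < g s).
    { intros; unfold g; apply Rmult_lt_0_compat; [lra|apply exp_pos]. }
    rewrite (RInt_ext phi (fun s => / (- mu) * ((- mu * g s) * h (g s))) T Ts).
    2:{ intros x Hx. rewrite Rmin_left in Hx by lra. rewrite Rmax_right in Hx by lra.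
        unfold phi, Cbc, h.
        destruct (Rle_dec x T); [lra|]. fold (g x). match goal with |- ?a = ?b => change (@eq R a b) end. field. split; [|lra].
        specialize (Hgpos x); lra. }
    assert (Hd : forall x, Rmin T Ts <= x <= Rmax T Ts -> is_derive g x (- mu * g x) /\ continuous (fun s => - mu * g s) x).
    { intros x _. split.
      * unfold g. auto_derive; auto. unfold Rminus. ring.
      * apply (@ex_derive_continuous R_AbsRing R_NormedModule). unfold g. auto_derive; auto. }
    assert (Hcomp := RInt_comp_R h g (fun s => - mu * g s) T Ts (fun x _ => h_cont k r (g x) (Hk _ (Hgpos x)) (Hgpos x)) Hd).
    rewrite RInt_scal_R.
    + rewrite Hcomp.
      replace (g T) with c by (unfold g; rewrite Rminus_diag, Rmult_0_r, exp_0; ring).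
      replace (g Ts) with zMIC by (unfold g; rewrite HgTs; reflexivity).
      rewrite RInt_swap_R.
      * unfold plus, scal; simpl; unfold mult; simpl. fold h. field; lra.
      * apply (@ex_RInt_continuous R_CompleteNormedModule). intros z Hz'.
        rewrite Rmin_left in Hz' by lra. apply h_cont. apply Hk. lra. lra.
    + apply (@ex_RInt_continuous R_CompleteNormedModule). intros z Hz'.
      apply (@continuous_mult R_UniformSpace R_AbsRing (fun s => - mu * g s) (fun s => h (g s))).
      * apply Hd. auto.
      * apply (@continuous_comp R_UniformSpace R_UniformSpace R_UniformSpace g h).
        apply (@ex_derive_continuous R_AbsRing R_NormedModule). eexists; apply Hd; auto. apply h_cont; auto.
  - intros t Ht. destruct (Rle_dec t Ts) as [H1|H1].
    + rewrite <- (RInt_Chasles phi 0 t Ts) by auto.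
      assert (0 <= RInt phi t Ts).
      { apply RInt_ge_0; auto. intros x Hx. unfold phi.
        assert (k zMIC <= k (Cbc c mu T x)) by (apply Hkm; [lra| apply Hge; lra]). lra. }
      unfold plus; simpl. lra.
    + rewrite <- (RInt_Chasles phi 0 Ts t) by auto.
      assert (RInt phi Ts t <= RInt (fun _ => 0) Ts t).
      { apply RInt_le; auto; try lra. apply ex_RInt_const. intros x Hx. unfold phi.
        assert (k (Cbc c mu T x) <= k zMIC) by (apply Hkm; [left; apply Cbc_pos; lra| apply Hle; lra]). lra. }
      rewrite RInt_const in H. unfold scal in H; simpl in H; unfold mult in H; simpl in H.
      unfold plus; simpl. lra.
Qed.

Lemma strict_decr (f df : R -> R) a b : a < b ->
  (forall x, a <= x <= b -> is_derive f x (df x)) ->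
  (forall x, a < x < b -> df x < 0) -> f b < f a.
Proof.
  intros Hab Hd Hn.
  destruct (MVT_cor2 f df a b Hab) as [c [Hc1 Hc2]].
  { intros c Hc. apply is_derive_Reals. auto. }
  specialize (Hn c Hc2). nra.
Qed.

Lemma strict_incr (f df : R -> R) a b : a < b ->
  (forall x, a <= x <= b -> is_derive f x (df x)) ->
  (forall x, a < x < b -> 0 < df x) -> f a < f b.
Proof.
  intros Hab Hd Hn.
  destruct (MVT_cor2 f df a b Hab) as [c [Hc1 Hc2]].
  { intros c Hc. apply is_derive_Reals. auto. }
  specialize (Hn c Hc2). nra.
Qed.

Lemma deriv_nonneg (k : R -> R) x :
  (forall x y, 0 <= x -> x < y -> k x < k y) -> 0 < x -> ex_derive k x -> 0 <= Derive k x.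
Proof.
  intros Hinc Hx Hd.
  destruct (Rle_or_lt 0 (Derive k x)) as [H|H]; auto.
  exfalso.
  pose proof (proj1 (is_derive_Reals k x (Derive k x)) (Derive_correct k x Hd)) as Hl.
  destruct (Hl (- Derive k x / 2)) as [d Hdel]. lra.
  assert (Hd0 := cond_pos d).
  specialize (Hdel (d / 2)). 
  assert (Hq : 0 < (k (x + d/2) - k x) / (d/2)).
  { apply Rdiv_lt_0_compat; [|lra]. assert (k x < k (x + d/2)) by (apply Hinc; lra). lra. }
  assert (Hab : Rabs ((k (x + d/2) - k x) / (d/2) - Derive k x) < - Derive k x / 2).
  { apply Hdel. lra. rewrite Rabs_right; lra. }
  apply Rabs_def2 in Hab. lra.
Qed.

Lemma g_deriv (k : R -> R) r x : ex_derive k x -> ex_derive (Derive k) x ->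
  is_derive (fun x => x * Derive k x - k x + r) x (x * Derive_n k 2 x).
Proof.
  intros H1 H2.
  auto_derive; auto. simpl. change (fun x0 => k x0) with k. change (fun x0 => Derive k x0) with (Derive k). match goal with |- ?a = ?b => change (@eq R a b) end. ring.
Qed.

Lemma g_sign (k : R -> R) r zMIC copt :
  (forall x y, 0 <= x -> x < y -> k x < k y) ->
  (forall c, 0 < c -> ex_derive k c) ->
  (forall c, 0 < c -> ex_derive (Derive k) c) ->
  ((forall c, 0 < c -> Derive_n k 2 c < 0) \/
   (exists cinfl, 0 < cinfl /\
      (forall c, 0 < c < cinfl -> Derive_n k 2 c > 0) /\
      (forall c, cinfl < c -> Derive_n k 2 c < 0))) ->
  0 < zMIC -> k zMIC = r -> 0 < copt -> Derive k copt = (k copt - r) / copt ->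
  forall x, 0 < x ->
    (x < copt -> 0 < x * Derive k x - k x + r) /\ (copt < x -> x * Derive k x - k x + r < 0).
Proof.
  intros Hinc Hd1 Hd2 HA3 Hz Hkz Hc Hcopt.
  set (G := fun x => x * Derive k x - k x + r).
  assert (HG0 : G copt = 0) by (unfold G; rewrite Hcopt; field; lra).
  assert (HGd : forall x, 0 < x -> is_derive G x (x * Derive_n k 2 x)).
  { intros x Hx. apply g_deriv; auto. }
  assert (Hsmall : forall y, 0 < y < zMIC -> 0 < G y).
  { intros y Hy. unfold G. assert (0 <= Derive k y) by (apply deriv_nonneg; [auto | lra | apply Hd1; lra]).
    assert (k y < k zMIC) by (apply Hinc; lra). nra. }
  change (forall x, 0 < x -> (x < copt -> 0 < G x) /\ (copt < x -> G x < 0)).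
  destruct HA3 as [Hconc | [ci [Hci [Hlo Hhi]]]].
  - intros x Hx. split; intros H.
    + rewrite <- HG0. apply (strict_decr G (fun x => x * Derive_n k 2 x)); auto.
      * intros y Hy; apply HGd; lra.
      * intros y Hy. assert (Derive_n k 2 y < 0) by (apply Hconc; lra). nra.
    + rewrite <- HG0. apply (strict_decr G (fun x => x * Derive_n k 2 x)); auto.
      * intros y Hy; apply HGd; lra.
      * intros y Hy. assert (Derive_n k 2 y < 0) by (apply Hconc; lra). nra.
  - assert (Hdec : forall a b, ci <= a -> a < b -> G b < G a).
    { intros a b Ha Hb. apply (strict_decr G (fun x => x * Derive_n k 2 x)); auto.
      * intros y Hy; apply HGd; lra.
      * intros y Hy. assert (Derive_n k 2 y < 0) by (apply Hhi; lra). nra. }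
    assert (Hinc' : forall a b, 0 < a -> a < b -> b <= ci -> G a < G b).
    { intros a b Ha Hb Hb'. apply (strict_incr G (fun x => x * Derive_n k 2 x)); auto.
      * intros y Hy; apply HGd; lra.
      * intros y Hy. assert (Derive_n k 2 y > 0) by (apply Hlo; lra). nra. }
    assert (Hpos : forall x, 0 < x <= ci -> 0 < G x).
    { intros x Hx. set (y := Rmin zMIC x / 2).
      assert (Hy : 0 < y < zMIC /\ y < x).
      { unfold y. assert (0 < Rmin zMIC x) by (apply Rmin_glb_lt; lra).
        assert (Rmin zMIC x <= zMIC) by apply Rmin_l.
        assert (Rmin zMIC x <= x) by apply Rmin_r. lra. }
      assert (0 < G y) by (apply Hsmall; lra).
      assert (G y < G x) by (apply Hinc'; lra). lra. }
    assert (Hci2 : ci < copt).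
    { destruct (Rlt_or_le ci copt) as [h|h]; auto. exfalso.
      assert (0 < G copt) by (apply Hpos; lra). lra. }
    intros x Hx. split; intros H.
    + destruct (Rle_or_lt x ci) as [h|h].
      * apply Hpos; lra.
      * rewrite <- HG0. apply Hdec; lra.
    + rewrite <- HG0. apply Hdec; lra.
Qed.

Lemma A_deriv (k F : R -> R) r mu L x dk : is_derive k x dk -> is_derive F x ((k x - r) / x) ->
  k x - r <> 0 -> x <> 0 -> mu <> 0 ->
  is_derive (fun x => x / mu + x * (L - F x / mu) / (k x - r)) x
    (- (L - F x / mu) * (x * dk - k x + r) / (k x - r) ^ 2).
Proof.
  intros Hk HF H1 H2 H3.
  auto_derive.
  - repeat split; auto; eexists; eauto.
  - change (fun x0 => k x0) with k. change (fun x0 => F x0) with F. rewrite (is_derive_unique _ _ _ Hk), (is_derive_unique _ _ _ HF).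
    match goal with |- ?a = ?b => change (@eq R a b) end. field. auto.
Qed.

Lemma F_deriv (k : R -> R) r zMIC x : 0 < zMIC -> (forall x, 0 < x -> continuous k x) -> 0 < x ->
  is_derive (fun x => RInt (fun u => (k u - r) / u) zMIC x) x ((k x - r) / x).
Proof.
  intros Hz Hk Hx.
  apply (@is_derive_RInt R_CompleteNormedModule (fun u => (k u - r) / u) (fun x => RInt (fun u => (k u - r) / u) zMIC x) zMIC x).
  - assert (Hx2 : 0 < x / 2) by lra.
    exists (mkposreal _ Hx2). intros y Hy.
    apply (@RInt_correct R_CompleteNormedModule).
    apply (@ex_RInt_continuous R_CompleteNormedModule). intros z Hz'.
    unfold ball in Hy; simpl in Hy; unfold AbsRing_ball, abs, minus, plus, opp in Hy; simpl in Hy.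
    apply Rabs_lt_between' in Hy.
    assert (0 < Rmin zMIC y) by (apply Rmin_glb_lt; lra).
    apply h_cont; [apply Hk|]; lra.
  - apply h_cont; auto.
Qed.

Lemma ln10_pos : 0 < ln 10.
Proof. rewrite <- ln_1. apply ln_increasing; lra. Qed.

Lemma feas_iff (k : R -> R) r c mu T zMIC LRt :
  (forall x, 0 < x -> continuous k x) ->
  (forall x y, 0 <= x -> x <= y -> k x <= k y) ->
  0 < zMIC -> k zMIC = r -> zMIC <= c -> 0 <= T -> 0 < mu ->
  (is_LRmax k r (Cbc c mu T) LRt <->
   (k c - r) * T + / mu * RInt (fun u => (k u - r) / u) zMIC c = ln 10 * LRt) /\
  LR k r (Cbc c mu T) (T + / mu * ln (c / zMIC)) =
   / ln 10 * ((k c - r) * T + / mu * RInt (fun u => (k u - r) / u) zMIC c).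
Proof.
  intros Hk Hkm Hz Hkz Hc HT Hmu.
  destruct (LR_calc k r c mu T zMIC Hk Hkm Hz Hkz Hc HT Hmu) as [E1 E2].
  assert (Hln : 0 <= ln (c / zMIC)).
  { rewrite <- ln_1. apply ln_le. lra.
    apply (Rmult_le_reg_r zMIC); auto. field_simplify; lra. }
  assert (HTs : 0 <= T + / mu * ln (c / zMIC)).
  { assert (0 <= / mu * ln (c / zMIC)).
    { apply Rmult_le_pos; auto. left; apply Rinv_0_lt_compat; auto. } lra. }
  pose proof ln10_pos as H10.
  assert (ELR : LR k r (Cbc c mu T) (T + / mu * ln (c / zMIC)) =
   / ln 10 * ((k c - r) * T + / mu * RInt (fun u => (k u - r) / u) zMIC c)).
  { unfold LR. rewrite E1. reflexivity. }
  split; auto.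
  assert (Hmax : forall t, 0 <= t -> LR k r (Cbc c mu T) t <= LR k r (Cbc c mu T) (T + / mu * ln (c / zMIC))).
  { intros t Ht. unfold LR. apply Rmult_le_compat_l. left; apply Rinv_0_lt_compat; auto. apply E2; auto. }
  split.
  - intros [[T0 [HT0 HL0]] Hall].
    assert (A1 := Hall _ HTs). assert (A2 := Hmax _ HT0). rewrite ELR in A1, A2.
    assert (Heq : / ln 10 * ((k c - r) * T + / mu * RInt (fun u => (k u - r) / u) zMIC c) = LRt) by lra.
    rewrite <- Heq. field. lra.
  - intros Heq. split.
    + exists (T + / mu * ln (c / zMIC)). split; auto. rewrite ELR, Heq. field. lra.
    + intros t Ht. specialize (Hmax t Ht). rewrite ELR, Heq in Hmax.
      replace (/ ln 10 * (ln 10 * LRt)) with LRt in Hmax by (field; lra). exact Hmax.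
Qed.

Lemma kder_pos (k : R -> R) x :
  (forall x y, 0 <= x -> x < y -> k x < k y) ->
  (forall c, 0 < c -> ex_derive k c) ->
  (forall c, 0 < c -> ex_derive (Derive k) c) ->
  ((forall c, 0 < c -> Derive_n k 2 c < 0) \/
   (exists cinfl, 0 < cinfl /\
      (forall c, 0 < c < cinfl -> Derive_n k 2 c > 0) /\
      (forall c, cinfl < c -> Derive_n k 2 c < 0))) ->
  0 < x -> 0 < Derive k x.
Proof.
  intros Hinc Hd1 Hd2 HA3 Hx.
  assert (Hnn : forall y, 0 < y -> 0 <= Derive k y) by (intros; apply deriv_nonneg; auto).
  assert (Hdd : forall y, 0 < y -> is_derive (Derive k) y (Derive_n k 2 y)).
  { intros y Hy. apply Derive_correct. auto. }
  assert (Hright : (forall c, x < c -> Derive_n k 2 c < 0) -> 0 < Derive k x).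
  { intros Hneg. assert (Derive k (x + 1) < Derive k x).
    { apply (strict_decr (Derive k) (Derive_n k 2)); try lra.
      intros; apply Hdd; lra. intros; apply Hneg; lra. }
    assert (0 <= Derive k (x+1)) by (apply Hnn; lra). lra. }
  destruct HA3 as [Hc | [ci [Hci [Hlo Hhi]]]].
  - apply Hright. intros; apply Hc; lra.
  - destruct (Rlt_or_le x ci) as [h|h].
    + assert (Derive k (x/2) < Derive k x).
      { apply (strict_incr (Derive k) (Derive_n k 2)); try lra.
        intros; apply Hdd; lra. intros; apply Hlo; lra. }
      assert (0 <= Derive k (x/2)) by (apply Hnn; lra). lra.
    + apply Hright. intros; apply Hhi; lra.
Qed.

Definition Fk (k : R -> R) r zMIC x := RInt (fun u => (k u - r) / u) zMIC x.
Definition Ak (k : R -> R) r zMIC mu L x := x / mu + x * (L - Fk k r zMIC x / mu) / (k x - r).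

Lemma F_incr (k : R -> R) r zMIC a b :
  (forall x, 0 < x -> continuous k x) ->
  (forall x y, 0 <= x -> x < y -> k x < k y) ->
  0 < zMIC -> k zMIC = r -> zMIC <= a -> a < b -> Fk k r zMIC a < Fk k r zMIC b.
Proof.
  intros Hk Hinc Hz Hkz Ha Hab. unfold Fk.
  apply (strict_incr _ (fun u => (k u - r) / u)); auto.
  - intros x Hx. apply F_deriv; auto; lra.
  - intros x Hx. apply Rdiv_lt_0_compat; [|lra].
    assert (k zMIC < k x) by (apply Hinc; lra). lra.
Qed.

Lemma A_der (k : R -> R) r zMIC mu L x :
  (forall x, 0 < x -> continuous k x) ->
  (forall x y, 0 <= x -> x < y -> k x < k y) ->
  (forall c, 0 < c -> ex_derive k c) ->
  0 < zMIC -> k zMIC = r -> 0 < mu -> zMIC < x ->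
  is_derive (Ak k r zMIC mu L) x
    (- (L - Fk k r zMIC x / mu) * (x * Derive k x - k x + r) / (k x - r) ^ 2).
Proof.
  intros Hk Hinc Hd1 Hz Hkz Hmu Hx. unfold Ak.
  assert (k zMIC < k x) by (apply Hinc; lra).
  apply (A_deriv k (Fk k r zMIC)).
  - apply Derive_correct; apply Hd1; lra.
  - unfold Fk. apply F_deriv; auto; lra.
  - lra.
  - lra.
  - lra.
Qed.

Lemma A_decr (k : R -> R) r zMIC mu L a b :
  (forall x, 0 < x -> continuous k x) ->
  (forall x y, 0 <= x -> x < y -> k x < k y) ->
  (forall c, 0 < c -> ex_derive k c) ->
  0 < zMIC -> k zMIC = r -> 0 < mu -> zMIC < a -> a < b ->
  (forall y, a < y < b -> 0 < L - Fk k r zMIC y / mu /\ 0 < y * Derive k y - k y + r) ->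
  Ak k r zMIC mu L b < Ak k r zMIC mu L a.
Proof.
  intros Hk Hinc Hd1 Hz Hkz Hmu Ha Hab Hs.
  apply (strict_decr _ (fun x => - (L - Fk k r zMIC x / mu) * (x * Derive k x - k x + r) / (k x - r) ^ 2)); auto.
  - intros x Hx. apply A_der; auto; lra.
  - intros y Hy. destruct (Hs y Hy) as [H1 H2].
    assert (k zMIC < k y) by (apply Hinc; lra).
    assert (0 < (k y - r) ^ 2) by (apply pow_lt; lra).
    unfold Rdiv. assert (0 < / (k y - r) ^ 2) by (apply Rinv_0_lt_compat; auto).
    assert (0 < (L - Fk k r zMIC y / mu) * (y * Derive k y - k y + r)) by (apply Rmult_lt_0_compat; auto).
    nra.
Qed.

Lemma A_incr (k : R -> R) r zMIC mu L a b :
  (forall x, 0 < x -> continuous k x) ->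
  (forall x y, 0 <= x -> x < y -> k x < k y) ->
  (forall c, 0 < c -> ex_derive k c) ->
  0 < zMIC -> k zMIC = r -> 0 < mu -> zMIC < a -> a < b ->
  (forall y, a < y < b -> 0 < L - Fk k r zMIC y / mu /\ y * Derive k y - k y + r < 0) ->
  Ak k r zMIC mu L a < Ak k r zMIC mu L b.
Proof.
  intros Hk Hinc Hd1 Hz Hkz Hmu Ha Hab Hs.
  apply (strict_incr _ (fun x => - (L - Fk k r zMIC x / mu) * (x * Derive k x - k x + r) / (k x - r) ^ 2)); auto.
  - intros x Hx. apply A_der; auto; lra.
  - intros y Hy. destruct (Hs y Hy) as [H1 H2].
    assert (k zMIC < k y) by (apply Hinc; lra).
    assert (0 < (k y - r) ^ 2) by (apply pow_lt; lra).
    unfold Rdiv. assert (0 < / (k y - r) ^ 2) by (apply Rinv_0_lt_compat; auto).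
    assert (0 < (L - Fk k r zMIC y / mu) * - (y * Derive k y - k y + r)) by (apply Rmult_lt_0_compat; lra).
    nra.
Qed.

Lemma F_zMIC (k : R -> R) r zMIC : Fk k r zMIC zMIC = 0.
Proof. unfold Fk. rewrite RInt_point. reflexivity. Qed.

Lemma feas_char (k : R -> R) r zMIC mu LRt c T :
  (forall x, 0 < x -> continuous k x) ->
  (forall x y, 0 <= x -> x < y -> k x < k y) ->
  0 < zMIC -> k zMIC = r -> 0 < mu -> 0 < LRt ->
  feasible k r zMIC mu LRt c T ->
  zMIC < c /\ 0 <= T /\ (k c - r) * T + / mu * Fk k r zMIC c = ln 10 * LRt /\
  AUC (Cbc c mu T) = Ak k r zMIC mu (ln 10 * LRt) c.
Proof.
  intros Hk Hinc Hz Hkz Hmu HL [Hc [HT Hmax]].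
  assert (Hkm : forall x y, 0 <= x -> x <= y -> k x <= k y).
  { intros x y Hx [H|H]; [left; apply Hinc; auto | subst; lra]. }
  apply (feas_iff k r c mu T zMIC LRt Hk Hkm Hz Hkz Hc HT Hmu) in Hmax.
  fold (Fk k r zMIC c) in Hmax.
  pose proof ln10_pos.
  assert (Hc' : zMIC < c).
  { destruct Hc as [h|h]; auto. subst c. rewrite F_zMIC, Hkz in Hmax.
    assert (0 < ln 10 * LRt) by (apply Rmult_lt_0_compat; auto). nra. }
  assert (k zMIC < k c) by (apply Hinc; lra).
  split; auto. split; auto. split; auto.
  rewrite AUC_Cbc by auto. unfold Ak. rewrite <- Hmax. field. lra.
Qed.
Theorem theorem3 (k : R -> R) (r kmax mu LRt zMIC copt : R)
  (* (A1) *)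
  (Hr : 0 < r)
  (Hk0 : k 0 = 0)
  (Hkpos : forall c, 0 <= c -> 0 <= k c)
  (Hkcont0 : filterlim k (at_right 0) (locally (k 0)))
  (Hkcont : forall c, 0 < c -> continuous k c)
  (Hkincr : forall x y, 0 <= x -> x < y -> k x < k y)
  (Hkd1 : forall c, 0 < c -> ex_derive k c)
  (Hkd2 : forall c, 0 < c -> ex_derive (Derive k) c)
  (* (A2) *)
  (Hkmax : is_lim k p_infty kmax)
  (* (A3) *)
  (HA3 : (forall c, 0 < c -> Derive_n k 2 c < 0) \/
         (exists cinfl, 0 < cinfl /\
            (forall c, 0 < c < cinfl -> Derive_n k 2 c > 0) /\
            (forall c, cinfl < c -> Derive_n k 2 c < 0)))
  (* alpha > 1 *)
  (Halpha : kmax / r > 1)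
  (Hmu : 0 < mu)
  (HLRt : 0 < LRt)
  (* zMIC: the c > 0 with k c = r *)
  (HzMIC : 0 < zMIC /\ k zMIC = r)
  (* c_opt: the solution in (0,oo) of k'(c) = (k(c) - r)/c *)
  (Hcopt : 0 < copt /\ Derive k copt = (k copt - r) / copt) :
  let rho := RInt (fun u => (k u - r) / u) zMIC copt in
  (rho < ln 10 * LRt * mu ->
     let Topt := (ln 10 * LRt - / mu * rho) / (k copt - r) in
     is_solution k r zMIC mu LRt copt Topt /\
     LR k r (Cbc copt mu Topt) (Topt + / mu * ln (copt / zMIC)) = LRt /\
     AUC (Cbc copt mu Topt) =
       (/ mu + (ln 10 * LRt - / mu * rho) / (k copt - r)) * copt) /\
  (ln 10 * LRt * mu <= rho ->
     exists cstar, zMIC <= cstar /\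
       RInt (fun u => (k u - r) / u) zMIC cstar = ln 10 * LRt * mu /\
       is_solution k r zMIC mu LRt cstar 0 /\
       (forall t, 0 <= t -> Cbc cstar mu 0 t = cstar * exp (- mu * t)) /\
       LR k r (Cbc cstar mu 0) (/ mu * ln (cstar / zMIC)) = LRt /\
       AUC (Cbc cstar mu 0) = / mu * cstar).
Proof.
  intros rho.
  destruct HzMIC as [Hz Hkz]. destruct Hcopt as [Hc0 Hcd].
  assert (Hkm : forall x y, 0 <= x -> x <= y -> k x <= k y).
  { intros x y Hx [H|H]; [left; apply Hkincr; auto | subst; lra]. }
  set (L := ln 10 * LRt).
  pose proof ln10_pos as H10.
  assert (HL : 0 < L) by (apply Rmult_lt_0_compat; auto).
  assert (Hdpos := kder_pos k copt Hkincr Hkd1 Hkd2 HA3 Hc0).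
  assert (Hkc : r < k copt).
  { assert (k copt - r = Derive k copt * copt) by (rewrite Hcd; field; lra). nra. }
  assert (Hcz : zMIC < copt).
  { destruct (Rlt_or_le zMIC copt) as [h|h]; auto.
    assert (k copt <= k zMIC) by (apply Hkm; lra). lra. }
  assert (Hg := g_sign k r zMIC copt Hkincr Hkd1 Hkd2 HA3 Hz Hkz Hc0 Hcd).
  assert (Hrho : rho = Fk k r zMIC copt) by reflexivity.
  assert (Hpos_of : forall y, Fk k r zMIC y < L * mu -> 0 < L - Fk k r zMIC y / mu).
  { intros y Hy. replace (L - Fk k r zMIC y / mu) with ((L * mu - Fk k r zMIC y) / mu) by (field; lra).
    apply Rdiv_lt_0_compat; lra. }
  assert (Hfeas_bound : forall c T, feasible k r zMIC mu LRt c T -> Fk k r zMIC c <= L * mu).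
  { intros c T Hf. destruct (feas_char k r zMIC mu LRt c T Hkcont Hkincr Hz Hkz Hmu HLRt Hf) as [Hcz' [HT' [Heq' _]]].
    assert (k zMIC < k c) by (apply Hkincr; lra).
    assert (0 <= (k c - r) * T) by (apply Rmult_le_pos; lra).
    assert (/ mu * Fk k r zMIC c <= L) by (fold L in Heq'; lra).
    replace (Fk k r zMIC c) with (mu * (/ mu * Fk k r zMIC c)) by (field; lra).
    rewrite Rmult_comm. apply Rmult_le_compat_r; lra. }
  split.
  - intros Hlt Topt.
    assert (HTopt : 0 < Topt).
    { unfold Topt. apply Rdiv_lt_0_compat; [|lra].
      fold L. rewrite Hrho in Hlt |- *. assert (0 < L - Fk k r zMIC copt / mu) by (apply Hpos_of; fold L in Hlt; lra).
      unfold Rdiv in H; lra. }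
    assert (Heqopt : (k copt - r) * Topt + / mu * Fk k r zMIC copt = L) by (unfold Topt; rewrite <- Hrho; field; lra).
    assert (Hfeas : feasible k r zMIC mu LRt copt Topt).
    { split; [lra|]. split; [lra|]. apply (proj1 (feas_iff k r copt mu Topt zMIC LRt Hkcont Hkm Hz Hkz ltac:(lra) ltac:(lra) Hmu)). exact Heqopt. }
    destruct (feas_char k r zMIC mu LRt copt Topt Hkcont Hkincr Hz Hkz Hmu HLRt Hfeas) as [_ [_ [_ HAopt]]].
    split; [split|split].
    + exact Hfeas.
    + intros c T Hf.
      destruct (feas_char k r zMIC mu LRt c T Hkcont Hkincr Hz Hkz Hmu HLRt Hf) as [Hcz' [HT' [Heq' HA']]].
      rewrite HAopt, HA'.
      assert (key : c <> copt -> Ak k r zMIC mu L copt < Ak k r zMIC mu L c).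
      { intros Hne. destruct (Rlt_or_le c copt) as [h|h].
        - apply A_decr; auto. intros y Hy. split.
          + apply Hpos_of. assert (Fk k r zMIC y < Fk k r zMIC copt) by (apply F_incr; auto; lra).
            fold L in Hlt. lra.
          + apply Hg; lra.
        - apply A_incr; auto; try lra. intros y Hy. split.
          + apply Hpos_of. assert (Fk k r zMIC y < Fk k r zMIC c) by (apply F_incr; auto; lra).
            assert (Fk k r zMIC c <= L * mu) by (eapply Hfeas_bound; eauto). lra.
          + apply Hg; lra. }
      fold L. split.
      * destruct (Req_dec c copt) as [e|n]; [subst; lra| left; apply key; auto].
      * intros Heq. destruct (Req_dec c copt) as [e|n].
        -- split; auto. subst c. fold L in Heq'.
           apply (Rmult_eq_reg_l (k copt - r)); lra.
        -- specialize (key n). lra.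
    + destruct (feas_iff k r copt mu Topt zMIC LRt Hkcont Hkm Hz Hkz (Rlt_le _ _ Hcz) (Rlt_le _ _ HTopt) Hmu) as [_ E].
      rewrite E. fold (Fk k r zMIC copt). rewrite Heqopt. unfold L. field. lra.
    + rewrite AUC_Cbc by lra. unfold Topt. field; lra.
  - intros Hge.
    set (F' := fun y => Fk k r zMIC (zMIC + Rmax 0 (y - zMIC))).
    assert (HF'c : continuity F').
    { intros y. apply continuity_pt_filterlim.
      apply (@continuous_comp R_UniformSpace R_UniformSpace R_UniformSpace (fun y => zMIC + Rmax 0 (y - zMIC)) (Fk k r zMIC)).
      - apply (@continuous_plus R_UniformSpace R_AbsRing R_NormedModule (fun _ => zMIC) (fun y => Rmax 0 (y - zMIC))).
        apply continuous_const. apply cont_Rmax0.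
      - apply (@ex_derive_continuous R_AbsRing R_NormedModule).
        eexists. unfold Fk. apply F_deriv; auto.
        assert (0 <= Rmax 0 (y - zMIC)) by apply Rmax_l. lra. }
    assert (HF'a : forall y, zMIC <= y -> F' y = Fk k r zMIC y).
    { intros y Hy. unfold F'. rewrite Rmax_right by lra. f_equal. ring. }
    set (y0 := ln 10 * LRt * mu).
    assert (Hy0 : 0 < y0) by (unfold y0; apply Rmult_lt_0_compat; auto).
    assert (Hy0L : y0 = L * mu) by (unfold y0, L; ring).
    destruct (IVT_gen F' zMIC copt y0 HF'c) as [cstar [Hcs Hcs2]].
    { rewrite !HF'a by lra. rewrite F_zMIC. rewrite <- Hrho.
      rewrite Rmin_left by lra. rewrite Rmax_right by lra. lra. }
    rewrite Rmin_left in Hcs by lra. rewrite Rmax_right in Hcs by lra.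
    rewrite HF'a in Hcs2 by lra.
    assert (Hcsz : zMIC < cstar).
    { destruct Hcs as [[h|h] _]; auto. subst cstar. rewrite F_zMIC in Hcs2. lra. }
    assert (Heqs : (k cstar - r) * 0 + / mu * Fk k r zMIC cstar = L) by (rewrite Hcs2; unfold y0, L; field; lra).
    assert (Hfeas : feasible k r zMIC mu LRt cstar 0).
    { split; [lra|]. split; [lra|]. apply (proj1 (feas_iff k r cstar mu 0 zMIC LRt Hkcont Hkm Hz Hkz ltac:(lra) ltac:(lra) Hmu)). exact Heqs. }
    destruct (feas_char k r zMIC mu LRt cstar 0 Hkcont Hkincr Hz Hkz Hmu HLRt Hfeas) as [_ [_ [_ HAs]]].
    exists cstar. split; [lra|]. split; [exact Hcs2|]. split; [split|split; [|split]].
    + exact Hfeas.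
    + intros c T Hf.
      destruct (feas_char k r zMIC mu LRt c T Hkcont Hkincr Hz Hkz Hmu HLRt Hf) as [Hcz' [HT' [Heq' HA']]].
      assert (Hb := Hfeas_bound c T Hf).
      assert (Hccs : c <= cstar).
      { destruct (Rlt_or_le cstar c) as [h|h]; auto.
        assert (Fk k r zMIC cstar < Fk k r zMIC c) by (apply F_incr; auto; lra).
        unfold y0, L in *. lra. }
      rewrite HAs, HA'.
      assert (key : c <> cstar -> Ak k r zMIC mu L cstar < Ak k r zMIC mu L c).
      { intros Hne. apply A_decr; auto; try lra. intros y Hy. split.
        + apply Hpos_of. assert (Fk k r zMIC y < Fk k r zMIC cstar) by (apply F_incr; auto; lra).
          unfold y0, L in *. lra.
        + apply Hg; lra. }
      fold L. split.
      * destruct (Req_dec c cstar) as [e|n]; [subst; lra| left; apply key; auto].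
      * intros Heq. destruct (Req_dec c cstar) as [e|n].
        -- split; auto. subst c. fold L in Heq'.
           assert (k zMIC < k cstar) by (apply Hkincr; lra).
           apply (Rmult_eq_reg_l (k cstar - r)); lra.
        -- specialize (key n). lra.
    + intros t Ht. rewrite Cbc_eq. rewrite Rmax_right by lra. f_equal. f_equal. ring.
    + destruct (feas_iff k r cstar mu 0 zMIC LRt Hkcont Hkm Hz Hkz (Rlt_le _ _ Hcsz) (Rle_refl 0) Hmu) as [_ E].
      rewrite Rplus_0_l in E. rewrite E. fold (Fk k r zMIC cstar). rewrite Heqs. unfold L. field. lra.
    + rewrite AUC_Cbc by lra. field. lra.
Qed.
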